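(* Let $\mathbf{H}\in\mathbb{R}^{m\times n}$ have full column rank and let $\mathcal{S}_A,\mathcal{S}_F\subseteq\{1,\dots,m\}$ be disjoint, $\mathcal{A}=\{\mathbf{a}\in\mathbb{R}^m: a_i=0\ \forall i\notin\mathcal{S}_A\}$. Let $\mathbf{U}\in\mathbb{R}^{m\times n}$ be any matrix whose columns form a basis of $\mathcal{R}(\mathbf{H})$. Define $\tilde{\mathbf{W}}=\mathbf{I}-\mathbf{U}(\mathbf{U}^T\mathbf{U})^{-1}\mathbf{U}^T$, the diagonal matrix $\tilde{\mathbf{\Omega}}\in\mathbb{R}^{m\times m}$ with $\tilde{\mathbf{\Omega}}_{ii}=1/\sqrt{\tilde{\mathbf{W}}_{ii}}$ if $\tilde{\mathbf{W}}_{ii}>0$ and $\tilde{\mathbf{\Omega}}_{ii}=0$ if $\tilde{\mathbf{W}}_{ii}=0$, the row selection matrix $\mathbf{I}_{\mathcal{S}_F}\in\mathbb{R}^{|\mathcal{S}_F|\times m}$ retaining the rows indexed by $\mathcal{S}_F$, and $\mathbf{U}_1$ (resp. $\mathbf{H}_1$) obtained from $\mathbf{U}$ (resp. $\mathbf{H}$) by replacing the rows indexed by $\mathcal{S}_F$ with zero rows. Consider (P1) maximize $\mathbb{E}\big[\sum_{i\in\mathcal{S}_F}\tilde r_i^2\big]$ over $\mathbf{a}$ subject to $\|\mathbf{a}\|_2^2=1$, $\mathbf{a}\in\mathcal{R}(\mathbf{H}_1)\cap\mathcal{A}$, (P2) maximize $\|\mathbf{I}_{\mathcal{S}_F}\tilde{\mathbf{\Omega}}\tilde{\mathbf{W}}\mathbf{a}\|_2^2$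 over $\mathbf{a}$ subject to $\|\mathbf{a}\|_2^2=1$, $\mathbf{a}\in\mathcal{R}(\mathbf{U}_1)\cap\mathcal{A}$, where in (P1) $\tilde{\mathbf{r}}$ is the normalized residue vector defined in the context. Then a vector is a solution of (P2) if and only if it is a solution of (P1).
   Context: Measurement model: $\mathbf{z}=\mathbf{H}\mathbf{x}+\mathbf{e}$ with fixed state $\mathbf{x}$ and $\mathbf{e}\sim\mathcal{N}(\mathbf{0},\sigma^2\mathbf{I})$; the adversary adds $\mathbf{a}\in\mathcal{A}$, giving $\mathbf{z}+\mathbf{a}$. Let $\mathbf{W}=\mathbf{I}-\mathbf{H}(\mathbf{H}^T\mathbf{H})^{-1}\mathbf{H}^T$; the residue is $\mathbf{r}=\mathbf{W}(\mathbf{z}+\mathbf{a})$ and the normalized residue is $\tilde{\mathbf{r}}=\mathbf{\Omega}\mathbf{r}$, where $\mathbf{\Omega}$ is diagonal with $\mathbf{\Omega}_{ii}=0$ if removing row $i$ from $\mathbf{H}$ makes it lose full column rank, and $\mathbf{\Omega}_{ii}=1/\sqrt{\sigma^2\mathbf{W}_{ii}}$ otherwise. The expectation in (P1) is over $\mathbf{e}$. $\mathcal{S}_A$ is the set of adversary-controlled sensors and $\mathcal{S}_F$ the set of sensors to be framed (made to appear as bad data). *)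

(* Defs.v *)
From HB Require Import structures.
From mathcomp Require Import all_boot all_order all_algebra.
From mathcomp Require Import all_classical all_reals all_analysis.

Set Implicit Arguments.
Unset Strict Implicit.
Unset Printing Implicit Defensive.

Import Order.TTheory GRing.Theory Num.Theory.
Local Open Scope classical_set_scope.
Local Open Scope ring_scope.

Section Defs.
Context {R : realType}.

Definition sqnorm k (v : 'cV[R]_k) : R := \sum_(i < k) v i 0 ^+ 2.

Definition full_col_rank m n (A : 'M[R]_(m, n)) : bool := \rank A == n.

Definition in_range m n (A : 'M[R]_(m, n)) (v : 'cV[R]_m) : Prop :=
  exists y : 'cV[R]_n, v = A *m y.

Definition col_basis_of m n k (U : 'M[R]_(m, k)) (H : 'M[R]_(m, n)) : Prop :=
  (forall v, in_range U v <-> in_range H v) /\ full_col_rank U.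

Definition resid_mx m n (A : 'M[R]_(m, n)) : 'M[R]_m :=
  1%:M - A *m invmx (A^T *m A) *m A^T.

Definition zero_rows m n (S : {set 'I_m}) (A : 'M[R]_(m, n)) : 'M[R]_(m, n) :=
  \matrix_(i, j) (if i \in S then 0 else A i j).

Definition attack_space m (SA : {set 'I_m}) (a : 'cV[R]_m) : Prop :=
  forall i, i \notin SA -> a i 0 = 0.

(* row selection matrix I_S (|S| x m), rows indexed by S in increasing order *)
Definition row_sel m (S : {set 'I_m}) : 'M[R]_(#|S|, m) :=
  \matrix_(k, j) ((enum_val k == j)%:R).

Definition Omega_tilde m (W : 'M[R]_m) : 'M[R]_m :=
  \matrix_(i, j) (if i == j then (if 0 < W i i then (Num.sqrt (W i i))^-1 else 0)
                  else 0).

(* Omega of the context: Omega_ii = 0 if removing row i of H makes it lose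
   full column rank, and 1/sqrt(sigma^2 W_ii) otherwise *)
Definition Omega_ctx m n (H : 'M[R]_(m, n)) (sigma : R) : 'M[R]_m :=
  \matrix_(i, j) (if i == j then
                    (if full_col_rank (row' i H)
                     then (Num.sqrt (sigma ^+ 2 * resid_mx H i i))^-1 else 0)
                  else 0).

End Defs.

Definition mutually_independent {R : realType} {d} {T : measurableType d}
  (P : probability T R) m (X : 'I_m -> {RV P >-> R}) : Prop :=
  forall B : 'I_m -> set R, (forall i, measurable (B i)) ->
    P (\bigcap_(i in [set: 'I_m]) (X i @^-1` B i)) =
    (\prod_(i < m) P (X i @^-1` B i))%E.

Definition gaussian_noise {R : realType} {d} {T : measurableType d}
  (P : probability T R) m (e : 'I_m -> {RV P >-> R}) (sigma : R) : Prop :=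
  mutually_independent e /\
  forall i (B : set R), measurable B ->
    distribution P (e i) B = normal_prob 0 sigma B.

Definition is_maximizer {V : Type} {disp} {O : porderType disp}
  (feas : V -> Prop) (f : V -> O) (a : V) : Prop :=
  feas a /\ forall b, feas b -> (f b <= f a)%O.

(* Main.v *)
Require Import Defs.
From HB Require Import structures.
From mathcomp Require Import all_boot all_order all_algebra.
From mathcomp Require Import all_classical all_reals all_analysis.
From mathcomp Require Import measurable_realfun random_variable.
From mathcomp Require Import ring lra.
Import Order.TTheory GRing.Theory Num.Theory.
Local Open Scope ring_scope.

Section LA.
Local Set Implicit Arguments.
Local Unset Strict Implicit.
Context {R : realType}.

Lemma ker_nz p q (B : 'M[R]_(p, q)) : ~~ row_free B ->
  exists2 v : 'rV[R]_p, v != 0 & v *m B = 0.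
Proof.
rewrite -kermx_eq0 => /eqP K0.
have [r hr] : exists r, row r (kermx B) != 0.
  case: (pickP (fun r => row r (kermx B) != 0)) => [r hr|H]; first by exists r.
  exfalso; apply: K0; apply/row_matrixP => r; rewrite row0.
  by have /negbFE/eqP := H r.
exists (row r (kermx B)) => //.
by rewrite -row_mul mulmx_ker row0.
Qed.

Lemma rv_sq_eq0 m (w : 'rV[R]_m) : w *m w^T = 0 -> w = 0.
Proof.
move=> h; apply/rowP => j; rewrite mxE.
have := congr1 (fun M : 'M[R]_1 => M 0 0) h; rewrite !mxE => hs.
have H0 : forall k, 0 <= w 0 k * w^T k 0 by move=> k; rewrite mxE -expr2 sqr_ge0.
have := @psumr_eq0P _ _ _ _ (fun k _ => H0 k) hs j isT.
by rewrite mxE -expr2 => /eqP; rewrite sqrf_eq0 => /eqP.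
Qed.

Lemma fcr_unit m n (A : 'M[R]_(m, n)) : full_col_rank A -> A^T *m A \in unitmx.
Proof.
move=> hA; rewrite -row_free_unit; apply/negPn/negP => /ker_nz [v v0 hv].
have hw : (v *m A^T) *m (v *m A^T)^T = 0.
  by rewrite trmx_mul trmxK mulmxA -(mulmxA v) hv mul0mx.
have /rv_sq_eq0 h0 := hw.
have fr : row_free A^T by rewrite /row_free mxrank_tr.
move/negP: v0; apply; apply/eqP; apply: (row_free_inj fr).
by rewrite h0 mul0mx.
Qed.

Lemma fcr_inj m n p (A : 'M[R]_(m, n)) (X : 'M[R]_(n, p)) :
  full_col_rank A -> A *m X = 0 -> X = 0.
Proof.
move=> hA hX.
by rewrite -(mulKmx (fcr_unit hA) X) -mulmxA (mulmxA A^T) -mulmxA hX !mulmx0.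
Qed.

Lemma resid_mul m n (A : 'M[R]_(m, n)) : full_col_rank A -> resid_mx A *m A = 0.
Proof.
move=> hA; rewrite /resid_mx mulmxBl mul1mx -!mulmxA mulVmx ?mulmx1 ?subrr //.
exact: fcr_unit.
Qed.

Lemma invmx_uniq n (A B : 'M[R]_n) : A *m B = 1%:M -> invmx A = B.
Proof.
move=> hAB; have [uA _] := mulmx1_unit hAB.
by rewrite -[invmx A]mulmx1 -hAB mulmxA mulVmx // mul1mx.
Qed.

Lemma range_factor m n k (A : 'M[R]_(m, n)) (B : 'M[R]_(m, k)) :
  full_col_rank A -> (forall j, in_range A (col j B)) ->
  A *m (invmx (A^T *m A) *m A^T *m B) = B.
Proof.
move=> hA hB; apply/matrixP => i j.
have [y hy] := hB j.
have -> : B i j = col j B i 0 by rewrite mxE.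
have -> : (A *m (invmx (A^T *m A) *m A^T *m B)) i j =
    (A *m (invmx (A^T *m A) *m A^T) *m col j B) i 0.
  by rewrite (colE j B) !mulmxA -colE [RHS]mxE.
rewrite hy.
have -> : A *m (invmx (A^T *m A) *m A^T) *m (A *m y) =
  A *m (invmx (A^T *m A) *m (A^T *m A) *m y) by rewrite !mulmxA.
by rewrite mulVmx ?fcr_unit // mul1mx.
Qed.

Lemma col_in_range m n (A : 'M[R]_(m, n)) j : in_range A (col j A).
Proof. by exists (delta_mx j 0); rewrite colE. Qed.

Lemma basis_factors m n (U H : 'M[R]_(m, n)) :
  full_col_rank H -> col_basis_of U H ->
  exists M N : 'M[R]_n, [/\ H *m M = U, U *m N = H & M *m N = 1%:M].
Proof.
move=> hH [hr hU].
set M := invmx (H^T *m H) *m H^T *m U.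
set N := invmx (U^T *m U) *m U^T *m H.
have hM : H *m M = U.
  by apply: range_factor => // j; apply/hr; exact: col_in_range.
have hN : U *m N = H.
  by apply: range_factor => // j; apply/hr; exact: col_in_range.
exists M, N; split => //.
apply/eqP; rewrite -subr_eq0; apply/eqP; apply: (fcr_inj hH).
by rewrite mulmxBr mulmxA hM hN mulmx1 subrr.
Qed.

Lemma resid_eq m n (U H : 'M[R]_(m, n)) :
  full_col_rank H -> col_basis_of U H -> resid_mx U = resid_mx H.
Proof.
move=> hH hb; have [M [N [hM hN hMN]]] := basis_factors hH hb.
have [uM _] := mulmx1_unit hMN.
have uMt : M^T \in unitmx by rewrite unitmx_tr.
have uG := fcr_unit hH.
have hinv : invmx (U^T *m U) = invmx M *m invmx (H^T *m H) *m invmx M^T.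
  apply: invmx_uniq.
  rewrite -hM trmx_mul -!mulmxA (mulmxA M) mulmxV // mul1mx.
  by rewrite (mulmxA H^T H) (mulmxA (H^T *m H)) mulmxV // mul1mx mulmxV.
rewrite /resid_mx hinv -hM trmx_mul; congr (_ - _).
rewrite !mulmxA -(mulmxA _ M) mulmxV // mulmx1.
by rewrite -(mulmxA _ (invmx M^T)) mulVmx // mulmx1.
Qed.

Lemma zero_rows_mul m n p (S : {set 'I_m}) (A : 'M[R]_(m, n)) (X : 'M[R]_(n, p)) :
  zero_rows S (A *m X) = zero_rows S A *m X.
Proof.
apply/matrixP => i j; rewrite !mxE; case: ifP => hi.
  by rewrite big1 // => k _; rewrite mxE hi mul0r.
by apply: eq_bigr => k _; rewrite mxE hi.
Qed.

Lemma range_zero_rows m n (S : {set 'I_m}) (U H : 'M[R]_(m, n)) :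
  full_col_rank H -> col_basis_of U H ->
  forall v, in_range (zero_rows S U) v <-> in_range (zero_rows S H) v.
Proof.
move=> hH hb v; have [M [N [hM hN _]]] := basis_factors hH hb.
split => -[y ->].
  by exists (M *m y); rewrite mulmxA -[zero_rows S H *m M]zero_rows_mul hM.
by exists (N *m y); rewrite mulmxA -[zero_rows S U *m N]zero_rows_mul hN.
Qed.

Lemma resid_diag0 m n (H : 'M[R]_(m, n)) i :
  full_col_rank H -> ~~ full_col_rank (row' i H) -> resid_mx H i i = 0.
Proof.
move=> hH hr.
have rf : ~~ row_free (row' i H)^T by rewrite /row_free mxrank_tr.
have [v v0 hv] := ker_nz rf.
set z := v^T.
have hz : row' i H *m z = 0 by rewrite /z -(trmxK (row' i H)) -trmx_mul hv trmx0.
set hz' := H *m z.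
have hz0 : hz' != 0.
  apply/eqP => h; move/eqP: v0; apply.
  by rewrite -(trmxK v) -/z (fcr_inj hH h) trmx0.
have others : forall r, r != i -> hz' r 0 = 0.
  move=> r hri; case: (unliftP i r) => [k ->|e]; last by rewrite e eqxx in hri.
  have h := congr1 (fun M : 'M[R]_(m.-1, 1) => M k 0) hz.
  rewrite /= [in RHS]mxE in h.
  rewrite /hz' mxE -[RHS]h mxE; apply: eq_bigr => l _; rewrite mxE.
  by rewrite row'Esub mxE.
have hi : hz' i 0 != 0.
  apply/negP => /eqP hi0; move/eqP: hz0; apply; apply/matrixP => r c.
  rewrite (ord1 c) [RHS]mxE; case: (eqVneq r i) => [->|hri]; first exact: hi0.
  exact: others.
have hW : resid_mx H *m hz' = 0 by rewrite /hz' mulmxA resid_mul // mul0mx.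
have h := congr1 (fun M : 'M[R]_(m, 1) => M i 0) hW.
rewrite /= [LHS]mxE [RHS]mxE (bigD1 i) //= big1 ?addr0 in h; last first.
  by move=> r hri; rewrite others // mulr0.
by move/eqP: h; rewrite mulf_eq0 (negbTE hi) orbF => /eqP.
Qed.

Lemma sqnorm_sel m (S : {set 'I_m}) (v : 'cV[R]_m) :
  sqnorm (row_sel S *m v) = \sum_(i in S) v i 0 ^+ 2.
Proof.
rewrite /sqnorm [RHS]big_enum_val; apply: eq_bigr => k _.
rewrite [in LHS]mxE (bigD1 (enum_val k)) //= /row_sel mxE eqxx mul1r big1 ?addr0 // => j hj.
by rewrite mxE eq_sym (negbTE hj) mul0r.
Qed.

End LA.

Section normal_aux1.
Local Open Scope classical_set_scope.
Context {R : realType} (s : R) (s0 : 0 < s).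
Local Notation mu := (@lebesgue_measure R).
Local Notation nu := (normal_prob 0 s).

Lemma normal_pdf_even x : normal_pdf 0 s (- x) = normal_pdf 0 s x.
Proof.
by rewrite normal_pdfE ?gt_eqF // /normal_fun !subr0 sqrrN.
Qed.

Lemma normal_sym (A : set R) : measurable A ->
  nu (-%R @^-1` A) = nu A.
Proof.
move=> mA; rewrite /normal_prob.
transitivity (\int[mu]_(x in -%R @^-1` A) ((fun y => (normal_pdf 0 s y)%:E) \o -%R) x)%E.
  by apply: eq_integral => x _ /=; rewrite normal_pdf_even.
rewrite -(@ge0_integral_pushforward _ _ _ _ _ (-%R : measurableTypeR R -> measurableTypeR R) _ mu) //=.
- apply: eq_measure_integral => B mB _.
  exact: lebesgue_measureN.
- apply/measurable_EFinP; apply: measurable_funTS; exact: measurable_normal_pdf.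
- by move=> y _; rewrite lee_fin normal_pdf_ge0.
Qed.

End normal_aux1.
Section normal_aux2.
Local Open Scope classical_set_scope.
Context {R : realType} (s : R).
Local Notation mu := (@lebesgue_measure R).
Local Notation nu := (normal_prob 0 s).

Lemma normal_density (f : R -> \bar R) : (forall x, 0 <= f x)%E ->
  measurable_fun setT f ->
  (\int[nu]_x f x = \int[mu]_x (f x * (normal_pdf 0 s x)%:E))%E.
Proof.
move=> f0 mf.
have numu := normal_prob_dominates 0 s.
rewrite -(Radon_Nikodym_SigmaFinite.change_of_variables numu f0 measurableT mf).
have mRN : measurable_fun setT (Radon_Nikodym_SigmaFinite.f nu mu).
  exact: (measurable_int mu (Radon_Nikodym_SigmaFinite.f_integrable numu)).
have mpdf : measurable_fun setT (fun x => (normal_pdf 0 s x)%:E).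
  by apply/measurable_EFinP; exact: measurable_normal_pdf.
apply: ae_eq_integral => //.
- exact: emeasurable_funM.
- exact: emeasurable_funM.
- apply: ae_eqe_mul2l.
  apply: integral_ae_eq => //.
  + exact: Radon_Nikodym_SigmaFinite.f_integrable.
  + move=> E _ mE.
    by rewrite -(Radon_Nikodym_SigmaFinite.f_integral numu mE).
Qed.

End normal_aux2.
Section normal_aux3.
Local Open Scope classical_set_scope.
Context {R : realType} (s : R) (s0 : 0 < s).
Local Notation mu := (@lebesgue_measure R).

Let s' := s * Num.sqrt 2.
Let s'0 : 0 < s'.
Proof. by rewrite mulr_gt0 // sqrtr_gt0. Qed.

Lemma sq_pdf_le x : x ^+ 2 * normal_pdf 0 s x <=
  (normal_peak s * (4 * s ^+ 2) / normal_peak s') * normal_pdf 0 s' x.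
Proof.
rewrite !normal_pdfE ?gt_eqF // /normal_fun !subr0.
set t := x ^+ 2 / (s' ^+ 2 *+ 2).
have hs' : s' ^+ 2 *+ 2 = 4 * s ^+ 2.
  by rewrite /s' exprMn sqr_sqrtr // -mulr_natr -mulrA -natrM mulrC.
have ht : x ^+ 2 = 4 * s ^+ 2 * t.
  rewrite /t hs'; field; rewrite gt_eqF //.
have h2 : - x ^+ 2 / (s ^+ 2 *+ 2) = - t + - t.
  rewrite /t hs'; field; rewrite gt_eqF //.
have t0 : 0 <= t by rewrite /t divr_ge0 // ?sqr_ge0 // mulrn_wge0 // sqr_ge0.
have htle : t <= expR t.
  by apply: le_trans (expR_ge1Dx t); rewrite lerDr.
rewrite h2 expRD.
have pk : 0 < normal_peak s' by apply: normal_peak_gt0; rewrite gt_eqF.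
have -> : normal_peak s * (4 * s ^+ 2) / normal_peak s' *
   (normal_peak s' * expR (- x ^+ 2 / (s' ^+ 2 *+ 2))) =
   normal_peak s * (4 * s ^+ 2) * expR (- t).
  rewrite /t mulNr; field; rewrite gt_eqF //.
rewrite ht.
have -> : 4 * s ^+ 2 * t * (normal_peak s * (expR (- t) * expR (- t))) =
  normal_peak s * (4 * s ^+ 2) * (t * (expR (- t) * expR (- t))) by ring.
apply: ler_wpM2l; first by rewrite mulr_ge0 ?normal_peak_ge0 // mulr_ge0 // sqr_ge0.
apply: le_trans (_ : expR t * (expR (- t) * expR (- t)) <= _).
  by rewrite ler_wpM2r // ?mulr_ge0 ?expR_ge0.
by rewrite mulrA -expRD addrN expR0 mul1r.
Qed.

Lemma normal_sq_fin :
  (\int[mu]_x ((x ^+ 2)%:E * (normal_pdf 0 s x)%:E) < +oo)%E.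
Proof.
set K := normal_peak s * (4 * s ^+ 2) / normal_peak s'.
apply: (@le_lt_trans _ _ (\int[mu]_x (K%:E * (normal_pdf 0 s' x)%:E))%E).
  apply: ge0_le_integral => //.
  - by move=> x _; rewrite -EFinM lee_fin mulr_ge0 ?sqr_ge0 ?normal_pdf_ge0.
  - apply: emeasurable_funM; apply/measurable_EFinP => //.
    exact: measurable_normal_pdf.
  - apply: emeasurable_funM => //; apply/measurable_EFinP.
    exact: measurable_normal_pdf.
  - by move=> x _; rewrite -!EFinM lee_fin; exact: sq_pdf_le.
rewrite integralZl //; last exact: integrable_normal_pdf.
by rewrite integral_normal_pdf mule1 ltry.
Qed.

End normal_aux3.

Section normal_rv.
Local Open Scope classical_set_scope.
Context {R : realType} {d : measure_display} {T : measurableType d} {P : probability T R}.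
Context (X : {RV P >-> R}) (s : R) (s0 : 0 < s).
Hypothesis hX : forall B, measurable B -> distribution P X B = normal_prob 0 s B.
Local Notation mu := (@lebesgue_measure R).
Local Notation nu := (normal_prob 0 s).

Let X' : T -> measurableTypeR R := X.
Let mX' : measurable_fun setT X'.
Proof. exact: (measurable_funP X). Qed.

Let pushE (A : set (measurableTypeR R)) : measurable A ->
  pushforward P X' A = nu A.
Proof. by move=> mA; rewrite -hX. Qed.

Let transfer (f : measurableTypeR R -> \bar R) : measurable_fun setT f ->
  (forall y, 0 <= f y)%E ->
  (\int[P]_x f (X x) = \int[nu]_y f y)%E.
Proof.
move=> mf f0.
transitivity (\int[pushforward P X']_y f y)%E.
  by rewrite ge0_integral_pushforward.
by apply: eq_measure_integral => A mA _; exact: pushE.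
Qed.

Lemma normal_rv_L2 : (X : T -> R) \in Lfun P 2%:E.
Proof.
rewrite inE; apply/andP; split.
  by rewrite inE /=; exact: measurable_funP.
rewrite inE /= /finite_norm unlock /Lnorm /=.
apply: poweR_lty.
under eq_integral => x _ do rewrite powR_mulrn // real_normK ?num_real //.
have mf : measurable_fun setT (fun y : R => (y ^+ 2)%:E).
  by apply/measurable_EFinP; exact: measurable_funX.
have f0 : forall y : R, (0 <= (y ^+ 2)%:E)%E by move=> y; rewrite lee_fin sqr_ge0.
rewrite (@transfer (fun y => (y ^+ 2)%:E)) //.
rewrite normal_density //.
under eq_integral do rewrite -EFinM.
apply: le_lt_trans (@normal_sq_fin R s s0).
by rewrite le_eqVlt; apply/orP; left; apply/eqP/eq_integral => x _; rewrite EFinM.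
Qed.

Lemma normal_rv_mean : ('E_P[X] = 0)%E.
Proof.
have L1 : (X : T -> R) \in Lfun P 1.
  apply: Lfun_subset12 => //; last exact: normal_rv_L2.
  exact: fin_num_measure.
have intX : P.-integrable setT (EFin \o X) by apply/Lfun1_integrable.
rewrite expectation_def integralE.
set h := fun y : R => maxe y%:E 0%E.
have mh : measurable_fun setT h.
  apply: measurable_maxe => //. 
have h0 y : (0 <= h y)%E by rewrite /h le_max lexx orbT.
have Ep : (\int[P]_x (EFin \o X)^\+ x = \int[nu]_y h y)%E.
  under eq_integral do rewrite funeposE.
  exact: (@transfer h).
have En : (\int[P]_x (EFin \o X)^\- x = \int[nu]_y h y)%E.
  transitivity (\int[nu]_y h (- y)%R)%E.
    rewrite -(@transfer (fun y => h (- y)%R)) //.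
      by apply: eq_integral => x _; rewrite funenegE /h /= EFinN.
    apply: measurableT_comp => //; exact: measurable_funN.
  have mN : measurable_fun setT (-%R : measurableTypeR R -> measurableTypeR R).
    exact: measurable_funN.
  transitivity (\int[pushforward nu (-%R : measurableTypeR R -> measurableTypeR R)]_y h y)%E.
    by rewrite ge0_integral_pushforward // preimage_setT.
  apply: eq_measure_integral => B mB _.
  exact: (@normal_sym R s s0 B mB).
rewrite Ep En subee //.
rewrite -Ep; apply: integrable_fin_num => //; exact: integrable_funepos.
Qed.

End normal_rv.

Section PC.
Local Open Scope classical_set_scope.
Context {R : realType} {d : measure_display} {T : measurableType d} {P : probability T R}.

Lemma Lfun_sum (p : \bar R) (p1 : (1 <= p)%E) (I : Type) (r : seq I) (Pr : pred I)
  (f : I -> T -> R) : (forall i, f i \in Lfun P p) ->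
  (fun w => \sum_(i <- r | Pr i) f i w) \in Lfun P p.
Proof.
move=> hf; elim: r => [|i r IH].
  under [X in X \in _]funext => w do rewrite big_nil.
  by rewrite -[X in X \in _]/(0 : T -> R) rpred0.
under [X in X \in _]funext => w do rewrite big_cons.
case: (Pr i) => //.
exact: (rpredD (hf i) IH).
Qed.

Lemma Lfun_scal (p : \bar R) (p1 : (1 <= p)%E) (k : R) (f : T -> R) :
  f \in Lfun P p -> (fun w => k * f w) \in Lfun P p.
Proof. move=> hf; exact: (rpredZ k hf). Qed.

Lemma E_sum (I : Type) (r : seq I) (Pr : pred I) (f : I -> T -> R) :
  (forall i, f i \in Lfun P 1) ->
  ('E_P[fun w => (\sum_(i <- r | Pr i) f i w)%R] = \sum_(i <- r | Pr i) 'E_P[f i])%E.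
Proof.
move=> hf; elim: r => [|i r IH].
  under [X in ('E_P[X])%E]funext => w do rewrite big_nil.
  by rewrite big_nil -[X in ('E_P[X])%E]/(cst 0 : T -> R) expectation_cst.
under [X in ('E_P[X])%E]funext => w do rewrite big_cons.
rewrite big_cons; case: (Pr i) => //.
rewrite (expectationD (hf i)) ?IH //.
exact: Lfun_sum.
Qed.

Lemma E_scal (k : R) (f : T -> R) : f \in Lfun P 1 ->
  ('E_P[fun w => (k * f w)%R] = k%:E * 'E_P[f])%E.
Proof.
move=> hf; rewrite -expectationZl //; congr ('E_P[_])%E.
by apply/funext => w /=; rewrite mulrC.
Qed.

End PC.

Theorem theorem4 (R : realType) (m n : nat)
  (H : 'M[R]_(m, n)) (SA SF : {set 'I_m}) (U : 'M[R]_(m, n))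
  (x : 'cV[R]_n) (sigma : R)
  (d : measure_display) (T : measurableType d) (P : probability T R)
  (e : 'I_m -> {RV P >-> R}) :
  full_col_rank H ->
  [disjoint SA & SF] ->
  col_basis_of U H ->
  0 < sigma ->
  gaussian_noise e sigma ->
  let Wt := resid_mx U in
  let Omt := Omega_tilde Wt in
  let U1 := zero_rows SF U in
  let H1 := zero_rows SF H in
  let W := resid_mx H in
  let Om := Omega_ctx H sigma in
  (* normalized residue for the realization w of the noise *)
  let rtilde (a : 'cV[R]_m) (w : T) : 'cV[R]_m :=
    Om *m (W *m (H *m x + \col_i (e i w) + a)) in
  let feasP1 (a : 'cV[R]_m) := sqnorm a = 1 /\ in_range H1 a /\ attack_space SA a in
  let objP1 (a : 'cV[R]_m) : \bar R :=
    ('E_P[fun w => (\sum_(i in SF) rtilde a w i 0 ^+ 2)%R])%E in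
  let feasP2 (a : 'cV[R]_m) := sqnorm a = 1 /\ in_range U1 a /\ attack_space SA a in
  let objP2 (a : 'cV[R]_m) : R := sqnorm (row_sel SF *m (Omt *m (Wt *m a))) in
  forall a : 'cV[R]_m, is_maximizer feasP2 objP2 a <-> is_maximizer feasP1 objP1 a.

Proof.
move=> hH hdisj hb s0 [_ hnorm] Wt Omt U1 H1 W Om rtilde feasP1 objP1 feasP2 objP2 a.
have hWt : Wt = W by exact: resid_eq.
have hOm : Om = sigma^-1 *: Omt.
  have rd : forall i, ~~ full_col_rank (row' i H) -> resid_mx H i i = 0.
    by move=> i; exact: resid_diag0.
  rewrite /Om /Omt hWt /W /Omega_ctx /Omega_tilde.
  move: (resid_mx H) rd => Wm rd.
  apply/matrixP => i j; rewrite !mxE.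
  case: ifP => hij; last by rewrite mulr0.
  case: ifP => hfr.
    rewrite sqrtrM ?sqr_ge0 // sqrtr_sqr gtr0_norm // invfM.
    case: ifP => // hpos.
    have -> : Num.sqrt (Wm i i) = 0 by apply/eqP; rewrite sqrtr_eq0 leNgt hpos.
    by rewrite invr0 mulr0.
  by rewrite (rd i (negbT hfr)) ltxx mulr0.
have hfeas : forall b, feasP1 b <-> feasP2 b.
  move=> b; have hR := range_zero_rows SF hH hb b.
  rewrite /feasP1 /feasP2 /U1 /H1.
  by split => -[-> [hr ha]]; split => //; split => //; apply/hR.
have hLe : forall j, (e j : T -> R) \in Lfun P 2%:E /\ ('E_P[e j] = 0)%E.
  move=> j; split; [exact: (@normal_rv_L2 R d T P (e j) sigma s0 (hnorm j))|exact: (@normal_rv_mean R d T P (e j) sigma s0 (hnorm j))].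
have sub12 : {subset Lfun P 2%:E <= Lfun P 1}.
  by apply: Lfun_subset12; exact: fin_num_measure.
set B := Om *m W.
set L := fun (i : 'I_m) (w : T) => \sum_(j < m) B i j * e j w.
have L2 : forall i, L i \in Lfun P 2%:E.
  move=> i; rewrite /L; apply: (@Lfun_sum _ _ _ P 2%:E (lee1n 2) _ _ xpredT (fun j w => B i j * e j w)) => j.
  exact: (@Lfun_scal _ _ _ P _ (lee1n 2) (B i j) _ (hLe j).1).
have EL : forall i, ('E_P[L i] = 0)%E.
  move=> i; rewrite /L E_sum; last by move=> j; apply: Lfun_scal => //; exact/sub12/(hLe j).1.
  rewrite big1 // => j _; rewrite E_scal; last exact/sub12/(hLe j).1.
  by rewrite (hLe j).2 mule0.
set G2 := fun w => \sum_(i in SF) L i w ^+ 2.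
have G2L : G2 \in Lfun P 1.
  rewrite /G2; apply: (@Lfun_sum _ _ _ P 1 (lexx _) _ _ (fun i => i \in SF) (fun i w => L i w ^+ 2)) => i.
  exact: (Lfun2_mul_Lfun1 (L2 i) (L2 i)).
set K := ('E_P[G2])%E.
have Kfin : K \is a fin_num by exact: expectation_fin_num.
have hobj : forall b, objP1 b = ((sigma^-1 ^+ 2 * objP2 b)%:E + K)%E.
  move=> b; set c := Omt *m (Wt *m b).
  have hr : forall w i, rtilde b w i 0 = sigma^-1 * c i 0 + L i w.
    move=> w i.
    have -> : rtilde b w = sigma^-1 *: c + B *m \col_j (e j w).
      rewrite /rtilde /c hWt !mulmxDr (mulmxA W H) resid_mul // mul0mx.
      rewrite mulmx0 add0r addrC; congr (_ + _); first by rewrite hOm -scalemxAl.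
      by rewrite /B mulmxA.
    rewrite !mxE; congr (_ + _); rewrite /L /=; apply: eq_bigr => j _; by rewrite mxE.
  have obj2 : objP2 b = \sum_(i in SF) c i 0 ^+ 2.
    exact: sqnorm_sel.
  set K1 := \sum_(i in SF) (sigma^-1 * c i 0) ^+ 2.
  set G1 := fun w => \sum_(i in SF) (2 * (sigma^-1 * c i 0)) * L i w.
  rewrite /objP1.
  have -> : (fun w => \sum_(i in SF) rtilde b w i 0 ^+ 2) = ((cst K1 \+ G1) \+ G2).
    apply/funext => w; rewrite /= /K1 /G1 /G2 -!big_split /=.
    by apply: eq_bigr => i _; rewrite hr; ring.
  have G1L : G1 \in Lfun P 1.
    rewrite /G1; apply: (@Lfun_sum _ _ _ P 1 (lexx _) _ _ (fun i => i \in SF) (fun i w => 2 * (sigma^-1 * c i 0) * L i w)) => i.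
    apply: (@Lfun_scal _ _ _ P 1 (lexx _)); exact/sub12/L2.
  rewrite expectationD //; last by rewrite rpredD // Lfun_cst.
  rewrite expectationD ?Lfun_cst // expectation_cst.
  have -> : ('E_P[G1] = 0)%E.
    rewrite /G1 E_sum; last by move=> i; apply: Lfun_scal => //; exact/sub12/L2.
    by rewrite big1 // => i _; rewrite E_scal ?EL ?mule0 //; exact/sub12/L2.
  rewrite adde0 obj2 /K1 mulr_sumr; congr (_%:E + _)%E.
  by apply: eq_bigr => i _; rewrite exprMn.
have key : forall b1 b2, (objP1 b1 <= objP1 b2)%O = (objP2 b1 <= objP2 b2)%O.
  move=> b1 b2; rewrite !hobj leeD2rE // lee_fin ler_pM2l //.
  by rewrite exprn_gt0 // invr_gt0.
split => -[fa ha]; split; first by apply/hfeas.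
- by move=> b fb; rewrite key; apply: ha; apply/hfeas.
- by apply/hfeas.
- by move=> b fb; rewrite -key; apply: ha; apply/hfeas.
Qed.
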